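(* Let $\mathcal X$ be finite with $|\mathcal X|\ge2$, $\mu\in\mathbb R^{\mathcal X}$, $\sigma\in(0,\infty)^{\mathcal X}$. On the probability simplex $\Delta(\mathcal X)$ define $$\mathcal W(p):=\sum_{x\in\mathcal X}p_x\Big(\mu_x+\sqrt{2\tilde I(p_x)}\,\sigma_x\Big)=\sum_{x\in\mathcal X}\big(p_x\mu_x+\phi(\Phi^{-1}(p_x))\,\sigma_x\big),$$ with the convention $\phi(\Phi^{-1}(0))=\phi(\Phi^{-1}(1))=0$. Then $\mathcal W$ is strictly concave on $\Delta(\mathcal X)$ and its unique maximizer over $\Delta(\mathcal X)$ is $q$ with $q_x=\Phi\big(\frac{\mu_x-\kappa^*}{\sigma_x}\big)$, where $\kappa^*\in\mathbb R$ is such that $\sum_x q_x=1$.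
   Context: $\Phi$ and $\phi$ denote the standard Gaussian CDF and PDF. The quasi-surprisal is $\tilde I(u):=\frac12\big(\phi(\Phi^{-1}(u))/u\big)^2$ for $u\in(0,1)$, so that $u\sqrt{2\tilde I(u)}=\phi(\Phi^{-1}(u))$. *)

(* Defs.v *)
From HB Require Import structures.
From mathcomp Require Import all_boot all_order all_algebra.
From mathcomp Require Import all_classical all_reals all_analysis.
Set Implicit Arguments. Unset Strict Implicit. Unset Printing Implicit Defensive.
Import Order.TTheory GRing.Theory Num.Theory.
Local Open Scope classical_set_scope.
Local Open Scope ring_scope.

Section Gauss.
Context {R : realType}.

Definition gphi (x : R) : R := normal_pdf 0 1 x.

Definition gPhi (x : R) : R :=
  Rintegral (@lebesgue_measure R) `]-oo, x] gphi.

(* Phi^{-1}(u): some x with Phi x = u (unique and existent for 0 < u < 1) *)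
Definition gPhiinv (u : R) : R := xget 0 [set x | gPhi x = u].

Definition phiPhiinv (u : R) : R :=
  if (0 < u) && (u < 1) then gphi (gPhiinv u) else 0.

Definition in_simplex (T : finType) (p : T -> R) : Prop :=
  (forall x, 0 <= p x) /\ \sum_(x : T) p x = 1.

Definition Wfun (T : finType) (mu sigma : T -> R) (p : T -> R) : R :=
  \sum_(x : T) (p x * mu x + phiPhiinv (p x) * sigma x).

End Gauss.

(* Main.v *)
Require Import Defs.
From HB Require Import structures.
From mathcomp Require Import all_boot all_order all_algebra.
From mathcomp Require Import all_classical all_reals all_analysis.
From mathcomp Require Import ring lra.
Import Order.TTheory GRing.Theory Num.Theory.
Import numFieldNormedType.Exports.
Local Open Scope ring_scope.

Section P1.
Local Open Scope classical_set_scope.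
Local Open Scope ring_scope.
Context {R : realType}.
Local Notation P := (@normal_prob R 0 1).

Lemma gphiE (x : R) : gphi x = normal_peak 1 * expR (- (x ^+ 2) / 2).
Proof.
by rewrite /gphi normal_pdfE ?oner_neq0 // /normal_fun subr0 expr1n.
Qed.

Lemma gphi_gt0 (x : R) : 0 < gphi x.
Proof. by rewrite gphiE mulr_gt0 ?expR_gt0 ?normal_peak_gt0 ?oner_neq0. Qed.

Lemma gphi_cont : continuous (@gphi R).
Proof. exact: continuous_normal_pdf (oner_neq0 _). Qed.
Lemma gphi_derive (x : R) : is_derive x 1 (@gphi R) (- x * gphi x).
Proof.
have E : (@gphi R) = (fun y => normal_peak 1 * (expR \o (fun z : R => - (z ^+ 2) / 2)) y).
  by apply/funext => y; rewrite gphiE.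
have h1 : is_derive x 1 (fun z : R => - (z ^+ 2) / 2) (- x).
  apply: trigger_derive.
  rewrite /GRing.scale /= !mulr0 add0r !mulr1. by field.
have h2 : is_derive x 1 (expR \o (fun z : R => - (z ^+ 2) / 2)) (expR (- (x ^+ 2) / 2) * - x).
  exact: (is_derive1_comp (is_derive_expR _) h1).
rewrite E; apply: trigger_derive; rewrite /GRing.scale /=; ring.
Qed.

Lemma gphi_integrable (A : set R) : measurable A ->
  (@lebesgue_measure R).-integrable A (EFin \o gphi).
Proof.
move=> mA; apply: (integrableS measurableT) => //.
exact: integrable_normal_pdf.
Qed.

Lemma gPhi_derive (x : R) : is_derive x 1 (@gPhi R) (gphi x).
Proof.
have xu : x < x + 1 by rewrite ltrDl.
have [d dE] := @continuous_FTC1 R gphi (BInfty _ true) x (x + 1) xu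
  (gphi_integrable _ (measurable_itv _)) (ltNyr _) (gphi_cont x).
apply: DeriveDef; first exact: d.
by rewrite -derive1E.
Qed.

Lemma gPhiE (x : R) : gPhi x = fine (P `]-oo, x]).
Proof. by []. Qed.

Lemma gPhi_small (e : R) : 0 < e -> exists x : R, gPhi x < e.
Proof.
move=> e0.
pose F := fun n : nat => [set` `]-oo, - (n%:R : R)]].
have H0 : (P \o F) @ \oo --> P (\bigcap_n F n).
  apply: nonincreasing_cvg_mu => //.
  - by rewrite (le_lt_trans (probability_le1 (normal_prob 0 1) _)) ?ltry //; exact: measurable_itv.
  - by move=> n; exact: measurable_itv.
  - by apply: bigcapT_measurable => n; exact: measurable_itv.
  - move=> m n mn; apply/subsetPset => x; rewrite /F /= !in_itv /= => xn.
    by rewrite (le_trans xn) // lerN2 ler_nat.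
have Hcap : \bigcap_n F n = set0.
  rewrite -subset0 => x /= Hx.
  have := Hx (Num.Def.trunc (- x)).+1 I; rewrite /F /= in_itv /= lerNr.
  by move=> /(lt_le_trans (truncnS_gt _)); rewrite ltxx.
have P0 : P (\bigcap_n F n) = (0:R)%:E by rewrite Hcap /normal_prob integral_set0.
have H : (fun n => P (F n)) @ \oo --> (0:R)%:E by rewrite -P0; exact: H0.
move/fine_cvgP : H => [_] /cvgr_lt /(_ e e0) [N _ HN].
exists (- (N%:R)); exact: (HN N (leqnn N)).
Qed.

Lemma gPhi_large (e : R) : 0 < e -> exists x : R, 1 - e < gPhi x.
Proof.
move=> e0.
pose F := fun n : nat => [set` `]-oo, (n%:R : R)]].
have H0 : (P \o F) @ \oo --> P (\bigcup_n F n).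
  apply: nondecreasing_cvg_mu => //.
  - by move=> n; exact: measurable_itv.
  - by apply: bigcupT_measurable => n; exact: measurable_itv.
  - move=> m n mn; apply/subsetPset => x; rewrite /F /= !in_itv /= => xn.
    by rewrite (le_trans xn) // ler_nat.
have Hcup : \bigcup_n F n = setT.
  rewrite -subTset => x _ /=.
  exists (Num.Def.trunc x).+1 => //=; rewrite /F /= in_itv /=.
  exact: (ltW (truncnS_gt _)).
have P1 : P (\bigcup_n F n) = (1:R)%:E by rewrite Hcup; exact: (probability_setT (normal_prob 0 1)).
have H : (fun n => P (F n)) @ \oo --> (1:R)%:E by rewrite -P1; exact: H0.
move/fine_cvgP : H => [_] /cvgr_gt.
move=> /(_ (1 - e)); rewrite ltrBlDr ltrDl => /(_ e0) [N _ HN].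
exists N%:R; exact: (HN N (leqnn N)).
Qed.

End P1.

Section P2.
Local Open Scope classical_set_scope.
Local Open Scope ring_scope.
Context {R : realType}.

Lemma gPhi_cont : continuous (@gPhi R).
Proof.
move=> x; apply/differentiable_continuous/derivable1_diffP.
by case: (gPhi_derive x).
Qed.

Lemma gphi_contT : continuous (@gphi R).
Proof. exact: gphi_cont. Qed.

Lemma gPhi_lt (x y : R) : x < y -> gPhi x < gPhi y.
Proof.
move=> xy.
have [c _ E] := MVT xy (fun z _ => gPhi_derive z)
  (continuous_subspaceT (@gPhi_cont)).
by rewrite -subr_gt0 E mulr_gt0 ?gphi_gt0 // subr_gt0.
Qed.

Lemma gPhi_le (x y : R) : x <= y -> gPhi x <= gPhi y.
Proof.
by rewrite le_eqVlt => /predU1P[->//|/gPhi_lt/ltW].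
Qed.

Lemma gPhi_ltP (x y : R) : (gPhi x < gPhi y) = (x < y).
Proof.
apply/idP/idP; last exact: gPhi_lt.
by apply: contraTT; rewrite -!leNgt; exact: gPhi_le.
Qed.

Lemma gPhi_inj (x y : R) : gPhi x = gPhi y -> x = y.
Proof.
move=> E; apply/eqP; rewrite eq_le !leNgt -(gPhi_ltP y x) -(gPhi_ltP x y) E ltxx.
done.
Qed.

Lemma gPhi_ge0 (x : R) : 0 <= gPhi x.
Proof. by rewrite gPhiE fine_ge0 // measure_ge0. Qed.

Lemma gPhi_le1 (x : R) : gPhi x <= 1.
Proof.
have m : measurable [set` `]-oo, x]] by exact: measurable_itv.
have h1 := probability_le1 (normal_prob 0 1) m.
rewrite gPhiE -lee_fin fineK //.
rewrite ge0_fin_numE ?measure_ge0 //.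
exact: le_lt_trans h1 (ltry _).
Qed.

Lemma gPhi_gt0 (x : R) : 0 < gPhi x.
Proof. by rewrite (le_lt_trans (gPhi_ge0 (x - 1))) // gPhi_lt // ltrBlDr ltrDl. Qed.

Lemma gPhi_lt1 (x : R) : gPhi x < 1.
Proof. by rewrite (lt_le_trans _ (gPhi_le1 (x + 1))) // gPhi_lt // ltrDl. Qed.

Lemma gPhi_surj (c : R) : 0 < c -> c < 1 -> exists y, gPhi y = c.
Proof.
move=> c0 c1.
have [a ha] := gPhi_small _ c0.
have c1' : 0 < 1 - c by rewrite subr_gt0.
have [b hb] : exists b, c < gPhi b.
  have [b hb] := gPhi_large _ c1'.
  by exists b; move: hb; rewrite opprB addrC subrK.
have ab : a <= b by rewrite ltW // -gPhi_ltP (lt_trans ha hb).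
have hv : Num.min (gPhi a) (gPhi b) <= c <= Num.max (gPhi a) (gPhi b).
  by rewrite ge_min le_max (ltW ha) (ltW hb) orbT.
have [y _ hy] := @IVT R gPhi a b c ab (continuous_subspaceT (@gPhi_cont)) hv.
by exists y.
Qed.

Lemma phiPhiinv_Phi (y : R) : phiPhiinv (gPhi y) = gphi y.
Proof.
rewrite /phiPhiinv gPhi_gt0 gPhi_lt1 /=; congr gphi.
apply: gPhi_inj; rewrite /gPhiinv.
by have := xgetPex 0 (ex_intro (fun x => gPhi x = gPhi y) y erefl).
Qed.

End P2.

Section P3.
Local Open Scope classical_set_scope.
Local Open Scope ring_scope.
Context {R : realType}.

Definition hh (y x : R) := gphi x + y * gPhi x.

Lemma hh_derive (y x : R) : is_derive x 1 (hh y) ((y - x) * gphi x).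
Proof.
have E : hh y = (fun z => gphi z + y *: gPhi z) by [].
rewrite E.
have h1 := gphi_derive x.
have h2 := gPhi_derive x.
apply: trigger_derive.
rewrite /GRing.scale /=; ring.
Qed.

Lemma hh_cont (y : R) : continuous (hh y).
Proof.
move=> x; apply/differentiable_continuous/derivable1_diffP.
by case: (hh_derive y x).
Qed.

Lemma hh_incr (y x1 x2 : R) : x1 < x2 -> x2 <= y -> hh y x1 < hh y x2.
Proof.
move=> x12 x2y.
have [c /andP[c1 c2] E] := MVT x12 (fun z _ => hh_derive y z)
  (continuous_subspaceT (@hh_cont y)).
rewrite -subr_gt0 E mulr_gt0 ?mulr_gt0 ?gphi_gt0 ?subr_gt0 //.
exact: lt_le_trans c2 x2y.
Qed.

Lemma hh_decr (y x1 x2 : R) : y <= x1 -> x1 < x2 -> hh y x2 < hh y x1.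
Proof.
move=> yx1 x12.
have [c /andP[c1 c2] E] := MVT x12 (fun z _ => hh_derive y z)
  (continuous_subspaceT (@hh_cont y)).
rewrite -subr_gt0 -opprB E -mulNr -mulNr mulr_gt0 ?mulr_gt0 ?gphi_gt0 ?subr_gt0 //.
rewrite opprB subr_gt0.
exact: le_lt_trans yx1 c1.
Qed.

Lemma hh_max (y x : R) : x != y -> hh y x < hh y y.
Proof.
case: (ltgtP x y) => // [xy|yx] _; first exact: hh_incr.
exact: hh_decr.
Qed.

End P3.

Section P4.
Local Open Scope classical_set_scope.
Local Open Scope ring_scope.
Context {R : realType}.

Lemma hh_pos (y : R) : 0 < hh y y.
Proof.
case: (leP 0 y) => y0.
  have := gphi_gt0 y; have := mulr_ge0 y0 (gPhi_ge0 y); rewrite /hh; lra.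
pose d := hh y y - hh y (y - 1).
have d0 : 0 < d by rewrite /d subr_gt0 hh_incr // ?ltrBlDr ?ltrDl.
have ny0 : 0 < - y by rewrite oppr_gt0.
pose m := Num.min (gPhi (y - 1)) (d / (- y)).
have m0 : 0 < m by rewrite lt_min gPhi_gt0 divr_gt0.
have [x hx] := gPhi_small _ m0.
have hx1 : gPhi x < gPhi (y - 1) by apply: lt_le_trans hx _; rewrite ge_min lexx.
have hx2 : gPhi x < d / (- y) by apply: lt_le_trans hx _; rewrite ge_min lexx orbT.
have xy : x < y - 1 by rewrite -gPhi_ltP.
have H1 : hh y x < hh y (y - 1) by apply: hh_incr => //; rewrite lerBlDr lerDl.
have H2 : (- y) * gPhi x < d by rewrite mulrC -ltr_pdivlMr.
have H3 : 0 < gphi x := gphi_gt0 x.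
rewrite /hh in H1 *; rewrite /d /hh in d0 H2.
nra.
Qed.

Lemma hh_pos1 (y : R) : 0 < hh y y - y.
Proof.
case: (leP y 0) => y0.
  have := gphi_gt0 y.
  have : 0 <= 1 - gPhi y by rewrite subr_ge0 gPhi_le1.
  rewrite /hh; nra.
pose d := hh y y - hh y (y + 1).
have d0 : 0 < d by rewrite /d subr_gt0 hh_decr // ?ltrDl.
pose m := Num.min (1 - gPhi (y + 1)) (d / y).
have m0 : 0 < m by rewrite lt_min subr_gt0 gPhi_lt1 divr_gt0.
have [x hx] := gPhi_large _ m0.
have hx1 : 1 - gPhi (y + 1) >= m by rewrite ge_min lexx.
have hx2 : d / y >= m by rewrite ge_min lexx orbT.
have hx3 : gPhi (y + 1) < gPhi x by lra.
have xy : y + 1 < x by rewrite -gPhi_ltP.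
have H1 : hh y x < hh y (y + 1) by apply: hh_decr => //; rewrite lerDl.
have H2 : y * (1 - gPhi x) < d.
  by rewrite mulrC -ltr_pdivlMr //; lra.
have H3 : 0 < gphi x := gphi_gt0 x.
rewrite /hh in H1 *; rewrite /d /hh in d0 H2.
nra.
Qed.

Lemma tangent (u y : R) : 0 <= u -> u <= 1 -> u != gPhi y ->
  phiPhiinv u < gphi y - y * (u - gPhi y).
Proof.
rewrite le_eqVlt => /predU1P[<- _ _|u0].
  rewrite /phiPhiinv ltxx /=; have := hh_pos y; rewrite /hh; lra.
rewrite le_eqVlt => /predU1P[-> _|u1 uy].
  rewrite /phiPhiinv ltxx andbF; have := hh_pos1 y; rewrite /hh; lra.
have [x hx] := gPhi_surj _ u0 u1.
move: uy; rewrite -hx phiPhiinv_Phi => xy.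
have : x != y by apply: contraNneq xy => ->.
move=> /hh_max; rewrite /hh; lra.
Qed.

Lemma tangent_le (u y : R) : 0 <= u -> u <= 1 ->
  phiPhiinv u <= gphi y - y * (u - gPhi y).
Proof.
move=> u0 u1; have [->|uy] := eqVneq u (gPhi y).
  by rewrite phiPhiinv_Phi subrr mulr0 subr0.
exact/ltW/tangent.
Qed.

End P4.

Section P5.
Local Open Scope classical_set_scope.
Local Open Scope ring_scope.
Context {R : realType}.

Lemma cont_sum_seq (I : Type) (s : seq I) (f : I -> R -> R) :
  (forall i, continuous (f i)) -> continuous (fun k => \sum_(i <- s) f i k).
Proof.
move=> cf; elim: s => [|i s IH] /=.
  under eq_fun do rewrite big_nil.
  exact: cst_continuous.
under eq_fun do rewrite big_cons.
by move=> k; apply: continuousD; [exact: cf | exact: IH].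
Qed.

Lemma sum_lt (T : finType) (a b : T -> R) (x0 : T) :
  (forall x, a x <= b x) -> a x0 < b x0 -> \sum_(x : T) a x < \sum_(x : T) b x.
Proof.
move=> ab ab0.
rewrite (bigD1 x0) //= [X in _ < X](bigD1 x0) //=.
by rewrite ltr_leD // ler_sum.
Qed.

Lemma simplex_le1 (T : finType) (p : T -> R) x : in_simplex p -> p x <= 1.
Proof.
case=> p0 p1; rewrite -p1 (bigD1 x) //= lerDl.
by apply: sumr_ge0 => y _.
Qed.

Lemma fun_neq (T : finType) (p p' : T -> R) : p <> p' -> exists x, p x != p' x.
Proof.
move=> pp'; case: (pselect (exists x, p x != p' x)) => // H.
exfalso; apply: pp'; apply/funext => x; apply/eqP; apply/negPn/negP => hx.
by apply: H; exists x.
Qed.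

Lemma g_conc (a b t : R) : 0 <= a -> a <= 1 -> 0 <= b -> b <= 1 ->
  0 < t -> t < 1 -> a != b ->
  t * phiPhiinv a + (1 - t) * phiPhiinv b < phiPhiinv (t * a + (1 - t) * b).
Proof.
move=> a0 a1 b0 b1 t0 t1 ab.
set c := t * a + (1 - t) * b.
have t1' : 0 < 1 - t by rewrite subr_gt0.
have [c0 c1] : 0 < c /\ c < 1.
  rewrite /c; case: (ltgtP a b) ab => // h _; split; nra.
have [y hy] := gPhi_surj _ c0 c1.
have ac : a != gPhi y.
  rewrite hy /c; apply/eqP => h; move/eqP: ab; apply.
  have : (1 - t) * (a - b) = a - (t * a + (1 - t) * b) by ring.
  rewrite -h subrr.
  by move/eqP; rewrite mulf_eq0 (gt_eqF t1') /= subr_eq0 => /eqP.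
have H1 := tangent _ _ a0 a1 ac.
have H2 := tangent_le b y b0 b1.
have H1' : t * phiPhiinv a < t * (gphi y - y * (a - gPhi y)) by rewrite ltr_pM2l.
have H2' : (1 - t) * phiPhiinv b <= (1 - t) * (gphi y - y * (b - gPhi y)).
  by rewrite ler_wpM2l // ltW.
have E : t * (gphi y - y * (a - gPhi y)) + (1 - t) * (gphi y - y * (b - gPhi y))
   = gphi y by rewrite hy /c; ring.
rewrite -hy phiPhiinv_Phi; lra.
Qed.

Lemma term_lt (a b t m s : R) : 0 <= a -> a <= 1 -> 0 <= b -> b <= 1 ->
  0 < t -> t < 1 -> 0 < s -> a != b ->
  t * (a * m + phiPhiinv a * s) + (1 - t) * (b * m + phiPhiinv b * s) <
  (t * a + (1 - t) * b) * m + phiPhiinv (t * a + (1 - t) * b) * s.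
Proof.
move=> a0 a1 b0 b1 t0 t1 s0 ab.
have H := g_conc _ _ _ a0 a1 b0 b1 t0 t1 ab.
have H' : (t * phiPhiinv a + (1 - t) * phiPhiinv b) * s <
   phiPhiinv (t * a + (1 - t) * b) * s by rewrite ltr_pM2r.
have E : t * (a * m + phiPhiinv a * s) + (1 - t) * (b * m + phiPhiinv b * s) =
  (t * a + (1 - t) * b) * m + (t * phiPhiinv a + (1 - t) * phiPhiinv b) * s by ring.
by rewrite E ltrD2l.
Qed.

Lemma term_le (a b t m s : R) : 0 <= a -> a <= 1 -> 0 <= b -> b <= 1 ->
  0 < t -> t < 1 -> 0 < s ->
  t * (a * m + phiPhiinv a * s) + (1 - t) * (b * m + phiPhiinv b * s) <=
  (t * a + (1 - t) * b) * m + phiPhiinv (t * a + (1 - t) * b) * s.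
Proof.
move=> a0 a1 b0 b1 t0 t1 s0.
have [<-|ab] := eqVneq a b; last exact/ltW/term_lt.
have -> : t * a + (1 - t) * a = a by ring.
by rewrite le_eqVlt; apply/orP; left; apply/eqP; ring.
Qed.

Lemma term3_le (u y m s k : R) : 0 <= u -> u <= 1 -> 0 < s -> s * y = m - k ->
  u * m + phiPhiinv u * s <=
  (gPhi y * m + phiPhiinv (gPhi y) * s) + k * (u - gPhi y).
Proof.
move=> u0 u1 s0 sy.
have H := ler_wpM2r (ltW s0) (tangent_le u y u0 u1).
have E : (gphi y - y * (u - gPhi y)) * s = gphi y * s - (m - k) * (u - gPhi y).
  by rewrite -sy; ring.
rewrite phiPhiinv_Phi.
have E2 : u * m + (gphi y * s - (m - k) * (u - gPhi y)) =
  gPhi y * m + gphi y * s + k * (u - gPhi y) by ring.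
rewrite -E2 lerD2l -E; exact: H.
Qed.

Lemma term3_lt (u y m s k : R) : 0 <= u -> u <= 1 -> 0 < s -> s * y = m - k ->
  u != gPhi y ->
  u * m + phiPhiinv u * s <
  (gPhi y * m + phiPhiinv (gPhi y) * s) + k * (u - gPhi y).
Proof.
move=> u0 u1 s0 sy uy.
have H : phiPhiinv u * s < (gphi y - y * (u - gPhi y)) * s.
  by rewrite ltr_pM2r //; exact: tangent.
have E : (gphi y - y * (u - gPhi y)) * s = gphi y * s - (m - k) * (u - gPhi y).
  by rewrite -sy; ring.
rewrite phiPhiinv_Phi.
have E2 : u * m + (gphi y * s - (m - k) * (u - gPhi y)) =
  gPhi y * m + gphi y * s + k * (u - gPhi y) by ring.
rewrite -E2 ltrD2l -E; exact: H.
Qed.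

End P5.

Theorem proposition4 (R : realType) (T : finType) (mu sigma : T -> R)
  (hT : (1 < #|T|)%N) (hsigma : forall x, 0 < sigma x) :
  (* strict concavity of W on the simplex *)
  (forall (p p' : T -> R) (t : R),
      in_simplex p -> in_simplex p' -> p <> p' -> 0 < t -> t < 1 ->
      t * Wfun mu sigma p + (1 - t) * Wfun mu sigma p'
        < Wfun mu sigma (fun x => t * p x + (1 - t) * p' x)) /\
  (* a normalizing kappa* exists *)
  (exists kappa : R, \sum_(x : T) gPhi ((mu x - kappa) / sigma x) = 1) /\
  (* for any such kappa*, q is the unique maximizer of W over the simplex *)
  (forall kappa : R, \sum_(x : T) gPhi ((mu x - kappa) / sigma x) = 1 ->
     let q := fun x => gPhi ((mu x - kappa) / sigma x) in
     in_simplex q /\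
     (forall p : T -> R, in_simplex p -> p <> q ->
        Wfun mu sigma p < Wfun mu sigma q)).
Proof.
split.
  move=> p p' t hp hp' pp' t0 t1.
  have [x0 hx0] := @fun_neq _ _ _ _ pp'.
  rewrite /Wfun !mulr_sumr -big_split /=.
  have b x : [/\ 0 <= p x, p x <= 1, 0 <= p' x & p' x <= 1].
    by split; [exact: hp.1 | exact: simplex_le1 | exact: hp'.1 | exact: simplex_le1].
  apply: (@sum_lt _ _ _ _ x0) => [x|].
    by have [? ? ? ?] := b x; apply: term_le.
  by have [? ? ? ?] := b x0; apply: term_lt.
split.
  pose F := fun k => \sum_(x : T) gPhi ((mu x - k) / sigma x).
  have Fc : continuous F.
    apply: cont_sum_seq => i k.
    have Hf : {for k, continuous (fun k : R => (mu i - k) / sigma i)}.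
      apply: cvgM; last exact: cvg_cst.
      by apply: cvgB; [exact: cvg_cst | exact: cvg_id].
    exact: (continuous_comp Hf (gPhi_cont _)).
  have nT : (2:R) <= #|T|%:R by rewrite ler_nat.
  have h2 : (0:R) < 1 / 2 by lra.
  have [z1 hz1] := gPhi_large _ h2.
  pose k1 := - \sum_(x : T) `|mu x - z1 * sigma x|.
  have hS1 x : `|mu x - z1 * sigma x| <= \sum_(y : T) `|mu y - z1 * sigma y|.
    by rewrite (bigD1 x) //= lerDl sumr_ge0.
  have Fk1 : 1 <= F k1.
    have : \sum_(x : T) ((1:R) / 2) <= F k1.
      apply: ler_sum => x _.
      have : z1 <= (mu x - k1) / sigma x.
        rewrite ler_pdivlMr // /k1.
        have := hS1 x; have := ler_norm (- (mu x - z1 * sigma x)); rewrite normrN; lra.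
      move/gPhi_le; lra.
    rewrite sumr_const -mulr_natr; nra.
  have nT0 : (0:R) < #|T|%:R by lra.
  have hn : (0:R) < (#|T|%:R)^-1 by rewrite invr_gt0.
  have [z2 hz2] := gPhi_small _ hn.
  pose k2 := \sum_(x : T) `|mu x - z2 * sigma x|.
  have hS2 x : `|mu x - z2 * sigma x| <= k2.
    by rewrite /k2 (bigD1 x) //= lerDl sumr_ge0.
  have Fk2 : F k2 <= 1.
    have : F k2 <= \sum_(x : T) (#|T|%:R)^-1.
      apply: ler_sum => x _.
      have : (mu x - k2) / sigma x <= z2.
        rewrite ler_pdivrMr //.
        have := hS2 x; have := ler_norm (mu x - z2 * sigma x); lra.
      move/gPhi_le; lra.
    rewrite sumr_const => H; apply: (le_trans H).
    by rewrite -(mulr_natr ((#|T|%:R : R)^-1)) mulVf ?gt_eqF.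
  have k12 : k1 <= k2.
    rewrite /k1; apply: (@le_trans _ _ 0); last by apply: sumr_ge0.
    by rewrite oppr_le0 sumr_ge0.
  have hv : Num.min (F k1) (F k2) <= 1 <= Num.max (F k1) (F k2).
    by rewrite ge_min le_max Fk1 Fk2 orbT.
  have [k _ hk] := @IVT R F k1 k2 1 k12 (continuous_subspaceT Fc) hv.
  by exists k.
move=> kappa hk q.
have hq : in_simplex q by split => // x; exact: gPhi_ge0.
split => // p hp pq.
have [x0 hx0] := @fun_neq _ _ _ _ pq.
have sy x : sigma x * ((mu x - kappa) / sigma x) = mu x - kappa.
  by rewrite mulrC divfK // gt_eqF.
apply: (@lt_le_trans _ _ (\sum_(x : T) ((q x * mu x + phiPhiinv (q x) * sigma x) + kappa * (p x - q x)))).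
  apply: (@sum_lt _ _ _ _ x0) => [x|].
    by apply: term3_le => //; [exact: hp.1 | exact: simplex_le1].
  by apply: term3_lt => //; [exact: hp.1 | exact: simplex_le1].
rewrite big_split /= -mulr_sumr sumrB hp.2 hk subrr mulr0 addr0.
by rewrite /Wfun.
Qed.
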